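(* Let $p\in(p_0,1/2)$ and $a\in(0,0.01)$ be constants, where $p_0$ is the real root of $4x^3-7x^2+5x-1$, and let $k$ be such that $ak$ is an even integer. For $K\subseteq[n]$ with $|K|=k$ let $M_K$ be the event that the subgraph of $G_{n,p}$ induced on $K$ belongs to $\mathcal{F}_k$ (for some choice of partitions). Then for every integer $i\le(1-10a)k$ and all $K,K'\in\binom{[n]}{k}$ with $|K\cap K'|=i$, $$\mathbb{P}[M_K\cap M_{K'}]\le(1-p)^{-(0.5-2a)ki}\,\big(\mathbb{P}[M_K]\big)^2.$$
   Context: A graph $F$ on a $k$-set $K$ is in $\mathcal{F}'_k$ if there are partitions $K=A\cup B$ and $A=A_1\cup\dots\cup A_r$ with $|A|=ak$, $|B|=(1-a)k$, $r=ak/2$, $|A_i|=2$, such that (1) $F$ is bipartite with parts $A$ and $B$, and (2) for every $i$ and every $\beta\in B$, $\beta$ is adjacent either to both vertices of $A_i$ or to neither. $F$ is in $\mathcal{F}_k$ if additionally, for such partitions, (3) every vertex of $A$ has degree at least $0.15k$, and (4) for all $i\ne j$ the symmetric difference of the neighborhoods of $A_i$ and $A_j$ has size at least $0.25k$. *)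

(* Defs.v *)
From HB Require Import structures.
From mathcomp Require Import all_boot all_order all_algebra.
From mathcomp Require Import all_classical all_reals all_analysis.
Set Implicit Arguments. Unset Strict Implicit. Unset Printing Implicit Defensive.
Import Order.TTheory GRing.Theory Num.Theory.
Local Open Scope ring_scope.

(* A graph on vertex set 'I_n is a set of 2-element subsets (edges). *)
Definition pairs (n : nat) : {set {set 'I_n}} := [set e : {set 'I_n} | #|e| == 2%N].

Definition adj (n : nat) (G : {set {set 'I_n}}) (x y : 'I_n) : bool :=
  (x != y) && ([set x; y] \in G).

Definition nbhd (n : nat) (G : {set {set 'I_n}}) (K X : {set 'I_n}) : {set 'I_n} :=
  [set y in K | [exists x in X, adj G x y]].

(* The subgraph of G induced on K belongs to F_k (for some choice of partitions
   K = A u B, A = A_1 u ... u A_r satisfying (1)-(4)). *)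
Definition inFk (R : realFieldType) (a : R) (k : nat) (n : nat)
    (G : {set {set 'I_n}}) (K : {set 'I_n}) : Prop :=
  exists (A B : {set 'I_n}) (P : {set {set 'I_n}}),
    [/\ (A :|: B = K /\ [disjoint A & B]),
        (#|A|%:R = a * k%:R) /\ (#|B|%:R = (1 - a) * k%:R),
        (finset.partition P A /\ (#|P|%:R = a * k%:R / 2%:R) /\ (forall X, X \in P -> #|X| = 2%N)) /\
        (forall x y, x \in K -> y \in K -> adj G x y ->
           ((x \in A) && (y \in B)) || ((x \in B) && (y \in A))),
        (forall X b x y, X \in P -> b \in B -> x \in X -> y \in X -> adj G b x = adj G b y)
      &
        (forall x, x \in A -> (15%:R / 100%:R : R) * k%:R <= #|[set y in K | adj G x y]|%:R) /\
        (forall X Y, X \in P -> Y \in P -> X != Y ->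
           (25%:R / 100%:R : R) * k%:R <=
           #|(nbhd G K X :\: nbhd G K Y) :|: (nbhd G K Y :\: nbhd G K X)|%:R)].

(* Probability of an event (a property of graphs on [n]) in G(n,p):
   each of the C(n,2) edges present independently with probability p. *)
Definition Gnp_prob (R : realFieldType) (n : nat) (p : R)
    (E : {set {set 'I_n}} -> Prop) : R :=
  \sum_(G : {set {set 'I_n}} | (G \subset pairs n) && `[< E G >])
     p ^+ #|G| * (1 - p) ^+ (#|pairs n| - #|G|).

(* Main.v *)
Require Import Defs.
From HB Require Import structures.
From mathcomp Require Import all_boot all_order all_algebra.
From mathcomp Require Import all_classical all_reals all_analysis.
From mathcomp Require Import ring lra zify.
From mathcomp Require Import fingroup perm.
Import Order.TTheory GRing.Theory Num.Theory.
Local Open Scope ring_scope.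

Lemma prod_weight (R : comNzRingType) (T : finType) (F J : {set T}) (x y : R) :
  \prod_e (if e \in J then (if e \in F then x else 0) else (if e \in F then y else 1))
  = if J \subset F then x ^+ #|J| * y ^+ (#|F| - #|J|) else 0.
Proof.
case: ifP => [JF|/negbT].
- rewrite (bigID (mem J)) /=.
  rewrite (eq_bigr (fun _ => x)) => [|e /= eJ]; last by rewrite eJ (fintype.subsetP JF).
  rewrite prodr_const.
  rewrite (bigID (mem F)) /=.
  rewrite (eq_bigr (fun _ => y)) => [|e /andP[/negbTE eJ eF]]; last by rewrite eJ eF.
  rewrite prodr_const big1 ?mulr1; last by move=> e /andP[/negbTE -> /negbTE ->].
  congr (_ ^+ _ * _ ^+ _).
  rewrite -(cardsID J F) (finset.setIidPr JF) addKn.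
  by apply: eq_card => e; rewrite !inE.
- case/fintype.subsetPn => e eJ eF.
  by rewrite (bigD1 e) //= eJ (negbTE eF) mul0r.
Qed.

Lemma sum_subsets (R : comNzRingType) (T : finType) (F : {set T}) (x y : R) :
  \sum_(J : {set T} | J \subset F) x ^+ #|J| * y ^+ (#|F| - #|J|) = (x + y) ^+ #|F|.
Proof.
transitivity (\sum_(J : {set T}) \prod_e (if e \in J then (if e \in F then x else 0) else (if e \in F then y else 1))).
  rewrite [LHS]big_mkcond /=; apply: eq_bigr => J _; by rewrite prod_weight.
rewrite -(@bigA_distr R 0 1 *%R +%R T (fun e => if e \in F then x else 0) (fun e => if e \in F then y else 1)).
rewrite (bigID (mem F)) /=.
rewrite (eq_bigr (fun _ => x + y)) => [|e /= ->] //.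
rewrite prodr_const big1 ?mulr1; last by move=> e /= /negbTE ->; rewrite add0r.
congr (_ ^+ _); by apply: eq_card => e; rewrite !inE.
Qed.

Lemma marg (R : comNzRingType) (U : finType) (D E0 S : {set U}) (p : R) :
  S \subset E0 -> E0 \subset D ->
  \sum_(H : {set U} | (H \subset D) && (H :&: E0 == S)) p ^+ #|H| * (1 - p) ^+ (#|D| - #|H|)
  = p ^+ #|S| * (1 - p) ^+ (#|E0| - #|S|).
Proof.
move=> sS sE.
have sSD : S \subset D by apply: fintype.subset_trans sE.
pose F := D :\: E0.
have cD : #|D| = (#|E0| + #|F|)%N.
  by rewrite /F -(cardsID E0 D) (finset.setIidPr sE).
have cS : (#|S| <= #|E0|)%N by apply: subset_leq_card.
have h1 : p + (1 - p) = 1 by rewrite addrC subrK.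
have hs : \sum_(J : {set U} | J \subset F) p ^+ #|J| * (1 - p) ^+ (#|F| - #|J|) = 1.
  by rewrite sum_subsets h1 expr1n.
transitivity (p ^+ #|S| * (1 - p) ^+ (#|E0| - #|S|) *
   \sum_(J : {set U} | J \subset F) p ^+ #|J| * (1 - p) ^+ (#|F| - #|J|)); last by rewrite hs mulr1.
rewrite mulr_sumr.
rewrite (reindex_onto (fun T => S :|: T) (fun H => H :\: E0)); last first.
  move=> H /andP[sHD /eqP HS]; apply/setP => e; rewrite !inE -HS !inE.
  by case: (e \in H); case: (e \in E0).
apply: congr_big => // [T|T sTF].
  apply/idP/idP.
  - move=> /andP[/andP[sSTD _] /eqP <-]; apply/fintype.subsetP => e; rewrite !inE => /andP[eE0 eST].
    by rewrite eE0 (fintype.subsetP sSTD) // inE.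
  - move=> sTF.
    have Tn : forall e, e \in T -> (e \notin E0) && (e \in D).
      by move=> e /(fintype.subsetP sTF); rewrite inE.
    apply/andP; split; first (apply/andP; split).
    + apply/fintype.subsetP => e; rewrite inE => /orP[/(fintype.subsetP sSD) //|/Tn /andP[]//].
    + apply/eqP/setP => e; rewrite !inE.
      case eS: (e \in S); first by rewrite (fintype.subsetP sS).
      by case eT: (e \in T) => //=; move/Tn: eT => /andP[/negbTE ->].
    + apply/eqP/setP => e; rewrite !inE.
      case eT: (e \in T); first by move/Tn: eT => /andP[-> _]; rewrite orbT.
      by case eS: (e \in S) => /=; rewrite ?andbF // (fintype.subsetP sS).
have sTF' : T \subset F.
  move: sTF => /andP[/andP[sSTD _] /eqP <-]; apply/fintype.subsetP => e; rewrite !inE => /andP[eE0 eST].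
  by rewrite eE0 (fintype.subsetP sSTD) // inE.
have cST : #|S :|: T| = (#|S| + #|T|)%N.
  rewrite cardsU; suff -> : S :&: T = finset.set0 by rewrite cards0 subn0.
  apply/setP => e; rewrite !inE; case eS: (e \in S) => //=.
  apply/negbTE/negP => /(fintype.subsetP sTF'); rewrite inE (fintype.subsetP sS) //.
have cT : (#|T| <= #|F|)%N by apply: subset_leq_card.
have -> : (#|D| - #|S :|: T| = (#|E0| - #|S|) + (#|F| - #|T|))%N by rewrite cST cD; lia.
rewrite cST !exprD; ring.
Qed.

Lemma inFk_local (R : realFieldType) (a : R) k n (G G' : {set {set 'I_n}}) (K : {set 'I_n}) :
  (forall x y, x \in K -> y \in K -> adj G x y = adj G' x y) -> inFk a k G K -> inFk a k G' K.
Proof.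
move=> hadj [A [B [P [[hAB hdis] hc [[hpart h1] h2] h3 [h4 h5]]]]].
have AK : A \subset K by rewrite -hAB finset.subsetUl.
have BK : B \subset K by rewrite -hAB finset.subsetUr.
have XK : forall X, X \in P -> X \subset K.
  by move=> X XP; apply: fintype.subset_trans AK; apply: partitionS hpart XP.
have hnb : forall X : {set 'I_n}, X \subset K -> nbhd G K X = nbhd G' K X.
  move=> X sXK; apply/setP => y; rewrite !inE; case yK: (y \in K) => //=.
  apply/existsP/existsP => [[x /andP[xX h]]|[x /andP[xX h]]]; exists x; rewrite xX /=.
    by rewrite -hadj // (fintype.subsetP sXK).
  by rewrite hadj // (fintype.subsetP sXK).
exists A, B, P; split => //.
- split => // x y xK yK; rewrite -hadj //; exact: h2.
- move=> X b x y XP bB xX yX.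
  have xK : x \in K by apply: (fintype.subsetP (XK X XP)).
  have yK : y \in K by apply: (fintype.subsetP (XK X XP)).
  have bK : b \in K by apply: (fintype.subsetP BK).
  by rewrite -(hadj b x) // -(hadj b y) //; apply: h3 XP bB xX yX.
- split.
  + move=> x xA; have xK : x \in K by apply: (fintype.subsetP AK).
    suff <- : [set y in K | adj G x y] = [set y in K | adj G' x y] by apply: h4.
    by apply/setP => y; rewrite !inE; case yK: (y \in K) => //=; rewrite hadj.
  + move=> X Y XP YP XY; rewrite -!hnb ?XK //; exact: h5.
Qed.

Definition imG n (s : {perm 'I_n}) (G : {set {set 'I_n}}) : {set {set 'I_n}} :=
  [set s @: (e : {set 'I_n}) | e in G].
Arguments imG {n}.

Lemma memP n (s : {perm 'I_n}) (A : {set 'I_n}) z : (s z \in s @: A) = (z \in A).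
Proof. by rewrite mem_imset //; apply: perm_inj. Qed.

Lemma adj_imG n (s : {perm 'I_n}) (G : {set {set 'I_n}}) (x y : 'I_n) : adj (imG s G) (s x) (s y) = adj G x y.
Proof.
rewrite /adj (inj_eq perm_inj); congr (_ && _).
have -> : [set s x; s y] = s @: [set x; y] by rewrite imsetU1 imset_set1.
by rewrite /imG mem_imset //; apply: imset_inj; apply: perm_inj.
Qed.

Lemma nbhd_imG n (s : {perm 'I_n}) (G : {set {set 'I_n}}) (K X : {set 'I_n}) :
  nbhd (imG s G) (s @: K) (s @: X) = s @: nbhd G K X.
Proof.
apply/setP => y; rewrite -[y](permKV s) memP !inE memP; congr (_ && _).
apply/existsP/existsP => [[x' /andP[]]|[x /andP[xX h]]].
  by rewrite -[x'](permKV s) memP adj_imG => xX h; exists ((s^-1)%g x'); rewrite xX.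
by exists (s x); rewrite memP xX adj_imG.
Qed.

Lemma inFk_perm (R : realFieldType) (a : R) k n (s : {perm 'I_n}) (G : {set {set 'I_n}}) (K : {set 'I_n}) :
  inFk a k G K -> inFk a k (imG s G) (s @: K).
Proof.
move=> [A [B [P [[hAB hdis] [hcA hcB] [[hpart [hcP h1]] h2] h3 [h4 h5]]]]].
have sinj : injective s by apply: perm_inj.
exists (s @: A), (s @: B), [set s @: (X : {set 'I_n}) | X in P]; split.
- by rewrite -imsetU hAB imset_disjoint.
- by rewrite !card_imset.
- split; first split.
  + by rewrite imset_partition.
  + split; first by rewrite card_imset //; apply: imset_inj.
    by move=> X' /imsetP[X XP ->]; rewrite card_imset // h1.
  + move=> x' y'; rewrite -[x'](permKV s) -[y'](permKV s) !memP adj_imG => xK yK hxy.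
    by apply: h2.
- move=> X' b' x' y' /imsetP[X XP ->].
  rewrite -[x'](permKV s) -[y'](permKV s) -[b'](permKV s) !memP !adj_imG => bB xX yX.
  exact: h3 XP bB xX yX.
- split.
  + move=> x'; rewrite -[x'](permKV s) memP => xA.
    suff -> : [set y in s @: K | adj (imG s G) (s ((s^-1)%g x')) y] = s @: [set y in K | adj G ((s^-1)%g x') y].
      by rewrite card_imset //; apply: h4.
    by apply/setP => y; rewrite -[y](permKV s) memP !inE memP adj_imG.
  + move=> X' Y' /imsetP[X XP ->] /imsetP[Y YP ->] XY.
    rewrite !nbhd_imG.
    set N1 := nbhd G K X; set N2 := nbhd G K Y.
    suff -> : (s @: N1 :\: s @: N2) :|: (s @: N2 :\: s @: N1) = s @: ((N1 :\: N2) :|: (N2 :\: N1)).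
      rewrite card_imset //; apply: h5 => //; apply: contra XY => /eqP ->; by [].
    by apply/setP => y; rewrite -[y](permKV s) memP !finset.in_setU !finset.in_setD !memP.
Qed.

Lemma sum_le_sub (R : numDomainType) (I : finType) (P P' : pred I) (F : I -> R) :
  (forall i, P i -> P' i) -> (forall i, P' i -> 0 <= F i) ->
  \sum_(i | P i) F i <= \sum_(i | P' i) F i.
Proof.
move=> hPP hF; rewrite [X in _ <= X](bigID P) /=.
have -> : \sum_(i | P' i && P i) F i = \sum_(i | P i) F i.
  apply: eq_bigl => i; rewrite andbC; case Pi: (P i) => //=; exact: hPP.
rewrite lerDl; apply: sumr_ge0 => i /andP[Pi _]; exact: hF.
Qed.

Definition wt (R : realFieldType) n (p : R) (G : {set {set 'I_n}}) : R :=
  p ^+ #|G| * (1 - p) ^+ (#|pairs n| - #|G|).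
Arguments wt {R n}.

Lemma wt_ge0 (R : realFieldType) n (p : R) (G : {set {set 'I_n}}) : 0 <= p <= 1 -> 0 <= wt p G.
Proof. by case/andP => p0 p1; rewrite /wt mulr_ge0 // exprn_ge0 // subr_ge0. Qed.

Lemma prob_perm (R : realFieldType) (a : R) k n (p : R) (s : {perm 'I_n}) (K : {set 'I_n}) :
  0 <= p <= 1 ->
  @Gnp_prob R n p (fun G => inFk a k G K) <= @Gnp_prob R n p (fun G => inFk a k G (s @: K)).
Proof.
move=> hp; rewrite /Gnp_prob.
set S1 := [set G : {set {set 'I_n}} | (G \subset pairs n) && `[< inFk a k G K >]].
have sinj : injective s by apply: perm_inj.
have einj : injective (fun e : {set 'I_n} => s @: e) by apply: imset_inj.
have Ginj : injective (imG s) by apply: imset_inj.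
have -> : \sum_(G : {set {set 'I_n}} | (G \subset pairs n) && `[< inFk a k G K >]) p ^+ #|G| * (1 - p) ^+ (#|pairs n| - #|G|)
   = \sum_(G in imG s @: S1) wt p G.
  rewrite big_imset /=; last by move=> x y _ _; apply: Ginj.
  apply: eq_big => [G|G _]; first by rewrite inE.
  by rewrite /wt /imG card_imset.
apply: sum_le_sub => [G' /imsetP[G]|G' _]; last exact: wt_ge0.
rewrite inE => /andP[sGp hG] ->; apply/andP; split.
  apply/fintype.subsetP => e' /imsetP[e eG ->]; rewrite /pairs inE card_imset //.
  by move: (fintype.subsetP sGp e eG); rewrite inE.
by apply/asboolP; apply: inFk_perm; apply/asboolP.
Qed.

Lemma prob_eqcard (R : realFieldType) (a : R) k n (p : R) (K K' : {set 'I_n}) :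
  0 <= p <= 1 -> #|K'| = #|K| ->
  @Gnp_prob R n p (fun G => inFk a k G K') <= @Gnp_prob R n p (fun G => inFk a k G K).
Proof.
move=> hp; have [m] := ubnP #|K' :\: K|; elim: m K' => // m IH K' hm cK.
have c1 := cardsID K K'; have c2 := cardsID K' K; rewrite finset.setIC in c2.
case: (set_0Vmem (K' :\: K)) => [e0|[y yD]].
  have sK : K' \subset K.
    apply/fintype.subsetP => z zK'; apply/negPn/negP => zK.
    have : z \in K' :\: K by rewrite inE zK zK'.
    by rewrite e0 inE.
  have -> : K' = K by apply/eqP; rewrite eqEcard sK cK leqnn.
  exact: lexx.
case: (set_0Vmem (K :\: K')) => [e1|[x xD]].
  move: c1 c2; rewrite e1 cards0 => c1 c2.
  have : (0 < #|K' :\: K|)%N by apply/card_gt0P; exists y.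
  lia.
move: yD xD; rewrite !inE => /andP[yK yK'] /andP[xK' xK].
pose s := tperm y x.
have mem' : forall z, (z \in s @: K') = (s z \in K').
  by move=> z; rewrite -{1}[z](permKV s) memP /s tpermV.
apply: le_trans (@prob_perm R a k n p s K' hp) _.
apply: IH; last by rewrite card_imset //; apply: perm_inj.
have -> : s @: K' :\: K = (K' :\: K) :\ y.
  apply/setP => z; rewrite !inE mem'.
  rewrite /s; case: tpermP => [->|->|/eqP zy /eqP zx]; rewrite ?eqxx ?(negbTE yK) ?(negbTE xK') ?xK ?yK' //=.
    by rewrite andbF.
  by rewrite (negbTE zy).
have yD : y \in K' :\: K by rewrite inE yK yK'.
by move: hm; rewrite (cardsD1 y (K' :\: K)) yD add1n ltnS.
Qed.

Lemma adj_agree n (G G' : {set {set 'I_n}}) (K : {set 'I_n}) :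
  (forall e, e \in [set e in pairs n | e \subset K] -> (e \in G) = (e \in G')) ->
  forall x y, x \in K -> y \in K -> adj G x y = adj G' x y.
Proof.
move=> h x y xK yK; rewrite /adj; case xy: (x == y) => //=.
apply: h; rewrite !inE cards2 xy /= finset.subUset !finset.sub1set xK yK.
done.
Qed.

Lemma swap_ineq (R : realFieldType) (a : R) k n (p : R) (K K' : {set 'I_n}) :
  0 <= p <= 1 ->
  \sum_(G : {set {set 'I_n}} | (G \subset pairs n) && `[< inFk a k G K /\ inFk a k G K' >])
     (wt p G * \sum_(H : {set {set 'I_n}} | (H \subset pairs n) &&
         (H :&: [set e in pairs n | e \subset K :&: K'] == G :&: [set e in pairs n | e \subset K :&: K'])) wt p H)
  <= @Gnp_prob R n p (fun G => inFk a k G K) * @Gnp_prob R n p (fun G => inFk a k G K').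
Proof.
move=> hp.
set D := pairs n; set E0 := [set e in D | e \subset K :&: K']; pose EK := [set e in D | e \subset K].
pose phi (u : {set {set 'I_n}} * {set {set 'I_n}}) :=
  ((u.1 :&: EK) :|: (u.2 :\: EK), (u.2 :&: EK) :|: (u.1 :\: EK)).
have phiK : forall u, phi (phi u) = u.
  move=> [G H]; rewrite /phi /=; congr (_, _); apply/setP => e; rewrite !(finset.in_setU, finset.in_setI, finset.in_setD);
  by case: (e \in EK); case: (e \in G); case: (e \in H).
pose cond := fun u : {set {set 'I_n}} * {set {set 'I_n}} =>
  ((u.1 \subset D) && `[< inFk a k u.1 K /\ inFk a k u.1 K' >]) &&
  ((u.2 \subset D) && (u.2 :&: E0 == u.1 :&: E0)).
pose Q := [set u | cond u].
pose F := fun u : {set {set 'I_n}} * {set {set 'I_n}} => wt p u.1 * wt p u.2.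
apply: (le_trans (_ : _ <= \sum_(u in Q) F u)).
  rewrite le_eqVlt; apply/orP; left; apply/eqP.
  under eq_bigr do rewrite mulr_sumr.
  rewrite pair_big_dep /=; apply: eq_bigl => u; by rewrite inE.
have cardphi : forall G H : {set {set 'I_n}},
    (#|(phi (G, H)).1| + #|(phi (G, H)).2| = #|G| + #|H|)%N.
  move=> G H; rewrite /phi /=.
  rewrite -(cardsID EK (G :&: EK :|: H :\: EK)) -(cardsID EK (H :&: EK :|: G :\: EK)).
  rewrite -(cardsID EK G) -(cardsID EK H).
  have e1 : forall X Y : {set {set 'I_n}}, (X :&: EK :|: Y :\: EK) :&: EK = X :&: EK.
    by move=> X Y; apply/setP => e; rewrite !(finset.in_setU, finset.in_setI, finset.in_setD); case: (e \in EK); rewrite ?andbF ?andbT ?orbF.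
  have e2 : forall X Y : {set {set 'I_n}}, (X :&: EK :|: Y :\: EK) :\: EK = Y :\: EK.
    by move=> X Y; apply/setP => e; rewrite !(finset.in_setU, finset.in_setI, finset.in_setD); case: (e \in EK); rewrite ?andbF ?andbT ?orbF.
  rewrite !e1 !e2; lia.
have FQ : forall u, u \in Q -> F (phi u) = F u.
  move=> [G H]; rewrite inE /cond /= => /andP[/andP[sG _] /andP[sH _]].
  have cG : (#|G| <= #|D|)%N by apply: subset_leq_card.
  have cH : (#|H| <= #|D|)%N by apply: subset_leq_card.
  have := cardphi G H.
  have c1 : (#|(phi (G, H)).1| <= #|D|)%N.
    apply: subset_leq_card; rewrite /phi /= finset.subUset; apply/andP; split.
      by apply: fintype.subset_trans (finset.subsetIl _ _) sG.
    by apply: fintype.subset_trans (finset.subsetDl _ _) sH.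
  have c2 : (#|(phi (G, H)).2| <= #|D|)%N.
    apply: subset_leq_card; rewrite /phi /= finset.subUset; apply/andP; split.
      by apply: fintype.subset_trans (finset.subsetIl _ _) sH.
    by apply: fintype.subset_trans (finset.subsetDl _ _) sG.
  move: c1 c2 => c1 c2 hc.
  have e3 : ((#|D| - #|(phi (G, H)).1|) + (#|D| - #|(phi (G, H)).2|) = (#|D| - #|G|) + (#|D| - #|H|))%N.
    move: hc c1 c2 cG cH; move: #|(phi (G, H)).1| #|(phi (G, H)).2| #|G| #|H| #|D| => x1 x2 x3 x4 N; lia.
  rewrite /F /wt /= mulrACA -!exprD.
  rewrite [X in _ = X]mulrACA -!exprD.
  by congr (_ * _ ^+ _); [rewrite hc | exact: e3].
have -> : \sum_(u in Q) F u = \sum_(v in phi @: Q) F v.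
  rewrite big_imset /=; last by move=> u v _ _ huv; rewrite -(phiK u) huv phiK.
  by apply: eq_bigr => u uQ; rewrite FQ.
rewrite /Gnp_prob big_distrlr /= pair_big_dep /=.
apply: sum_le_sub => [v /imsetP[[G H] uQ ->]|v _]; last first.
  by apply: mulr_ge0; apply: wt_ge0.
move: uQ; rewrite inE /cond /= => /andP[/andP[sG /asboolP [iK iK']] /andP[sH /eqP hE0]].
apply/andP; split; apply/andP; split.
- rewrite finset.subUset; apply/andP; split.
    by apply: fintype.subset_trans (finset.subsetIl _ _) sG.
  by apply: fintype.subset_trans (finset.subsetDl _ _) sH.
- apply/asboolP; apply: inFk_local iK; apply: adj_agree => e eK.
  by rewrite !(finset.in_setU, finset.in_setI, finset.in_setD) eK /= orbF andbT.
- rewrite finset.subUset; apply/andP; split.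
    by apply: fintype.subset_trans (finset.subsetIl _ _) sH.
  by apply: fintype.subset_trans (finset.subsetDl _ _) sG.
- apply/asboolP; apply: inFk_local iK'; apply: adj_agree => e eK'.
  rewrite !(finset.in_setU, finset.in_setI, finset.in_setD).
  case eK: (e \in EK); rewrite /= ?andbT ?andbF ?orbF //.
  have eE0 : e \in E0.
    move: eK eK'; rewrite /EK /E0 !inE => /andP[-> eK] /andP[_ eK'].
    by rewrite finset.subsetI eK eK'.
  move/setP: hE0 => /(_ e); rewrite !finset.in_setI eE0 !andbT.
  by move=> ->.
Qed.

Lemma edges_bound (R : realFieldType) (a : R) k n (G : {set {set 'I_n}}) (K I : {set 'I_n}) :
  I \subset K -> inFk a k G K ->
  #|G :&: [set e in pairs n | e \subset I]|%:R <= a * k%:R * #|I|%:R :> R.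
Proof.
move=> sIK [A [B [P [[hAB hdis] [hcA hcB] [_ h2] h3 _]]]].
have -> : a * k%:R * #|I|%:R = (#|finset.setX A I|)%:R :> R by rewrite cardsX natrM hcA.
rewrite ler_nat.
apply: leq_trans (leq_imset_card (fun u : 'I_n * 'I_n => [set u.1; u.2]) (finset.setX A I)).
apply: subset_leq_card; apply/fintype.subsetP => e; rewrite !inE => /andP[eG /andP[e2 eI]].
case/cards2P: e2 => x [y [xy exy]].
have xI : x \in I by apply: (fintype.subsetP eI); rewrite exy !inE eqxx.
have yI : y \in I by apply: (fintype.subsetP eI); rewrite exy !inE eqxx orbT.
have hxy : adj G x y by rewrite /adj xy -exy.
case/orP: (h2 x y (fintype.subsetP sIK x xI) (fintype.subsetP sIK y yI) hxy) => /andP[xA yA].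
  by apply/imsetP; exists (x, y); rewrite // inE xA yI.
apply/imsetP; exists (y, x); first by rewrite inE yA xI.
by rewrite exy /= finset.setUC.
Qed.

Lemma E0_bound n (I : {set 'I_n}) :
  (2 * #|[set e in pairs n | e \subset I]| <= #|I| * #|I|)%N.
Proof.
have h : (#|[set e in pairs n | e \subset I]| <= 'C(#|I|, 2))%N.
  rewrite -cards_draws; apply: subset_leq_card; apply/fintype.subsetP => e.
  by rewrite !inE => /andP[-> ->].
have h2 : (2 * 'C(#|I|, 2) = #|I| * #|I|.-1)%N.
  by rewrite -(mul_bin_diag #|I| 1) bin1.
have h3 : (#|I| * #|I|.-1 <= #|I| * #|I|)%N by rewrite leq_mul2l leq_pred orbT.
lia.
Qed.

Lemma p_bound (R : realFieldType) (p0 p : R) :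
  4%:R * p0 ^+ 3 - 7%:R * p0 ^+ 2 + 5%:R * p0 - 1 = 0 ->
  p0 < p -> p < 1 / 2%:R -> 0 < p /\ (1 - p) ^+ 4 <= p.
Proof.
move=> hc h0 h1.
have p0pos : 0 < p0.
  rewrite ltNge; apply/negP => hn.
  have : 4%:R * p0 ^+ 3 - 7%:R * p0 ^+ 2 + 5%:R * p0 - 1 < 0 by nra.
  by rewrite hc ltxx.
have hf : 0 < 4%:R * p ^+ 3 - 7%:R * p ^+ 2 + 5%:R * p - 1.
  rewrite -hc -subr_gt0.
  have -> : 4%:R * p ^+ 3 - 7%:R * p ^+ 2 + 5%:R * p - 1 - (4%:R * p0 ^+ 3 - 7%:R * p0 ^+ 2 + 5%:R * p0 - 1)
     = (p - p0) * (4%:R * (p ^+ 2 + p * p0 + p0 ^+ 2) - 7%:R * (p + p0) + 5%:R) by ring.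
  apply: mulr_gt0; first by rewrite subr_gt0.
  nra.
split; first by lra.
rewrite -subr_ge0.
have -> : p - (1 - p) ^+ 4 = (4%:R * p ^+ 3 - 7%:R * p ^+ 2 + 5%:R * p - 1) + p ^+ 2 * (1 - p ^+ 2) by ring.
apply: addr_ge0; first exact: ltW.
apply: mulr_ge0; first exact: sqr_ge0.
nra.
Qed.

Lemma num_bound (R : realFieldType) (a e E i k : R) :
  e <= a * k * i -> 2 * E <= i * i -> i <= (1 - 10%:R * a) * k -> 0 <= i ->
  3%:R * e + E <= (1 / 2%:R - 2%:R * a) * k * i.
Proof.
move=> h1 h2 h3 h4.
have hh : i * i <= (1 - 10%:R * a) * k * i by apply: ler_wpM2r.
lra.
Qed.
Lemma nat_bound (e E : nat) : (e <= E)%N -> (4 * e + (E - e) = 3 * e + E)%N.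
Proof. lia. Qed.

Theorem mainTheorem13 (R : realType) (p0 p a : R) (k n i : nat)
    (K K' : {set 'I_n}) :
  4%:R * p0 ^+ 3 - 7%:R * p0 ^+ 2 + 5%:R * p0 - 1 = 0 ->
  p0 < p -> p < 1 / 2%:R ->
  0 < a -> a < 1 / 100%:R ->
  (exists m : nat, a * k%:R = (2 * m)%N%:R) ->
  i%:R <= (1 - 10%:R * a) * k%:R ->
  #|K| = k -> #|K'| = k -> #|K :&: K'| = i ->
  @Gnp_prob R n p (fun G => @inFk R a k n G K /\ @inFk R a k n G K')
  <= (1 - p) `^ (- ((1 / 2%:R - 2%:R * a) * k%:R * i%:R))
     * (@Gnp_prob R n p (fun G => @inFk R a k n G K)) ^+ 2.
Proof.
move=> hc hp0 hp1 ha0 ha1 _ hi cK cK' cI.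
have [ppos p4] := @p_bound R p0 p hc hp0 hp1.
have p1 : p < 1 by lra.
have hp : 0 <= p <= 1 by rewrite !ltW.
have q0 : 0 < 1 - p by rewrite subr_gt0.
set X := (1 / 2%:R - 2%:R * a) * k%:R * i%:R.
set c := (1 - p) `^ X.
have cpos : 0 < c by apply: powR_gt0.
set E0 := [set e in pairs n | e \subset K :&: K'].
set PK := @Gnp_prob R n p (fun G => @inFk R a k n G K).
set PK' := @Gnp_prob R n p (fun G => @inFk R a k n G K').
set J := @Gnp_prob R n p (fun G => @inFk R a k n G K /\ @inFk R a k n G K').
have PK0 : 0 <= PK by apply: sumr_ge0 => G _; apply: wt_ge0.
have hsym : PK' <= PK by apply: prob_eqcard => //; rewrite cK cK'.
have hsw := @swap_ineq R a k n p K K' hp.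
have sE : E0 \subset pairs n by apply/fintype.subsetP => e; rewrite inE => /andP[].
have key : c * J <= \sum_(G : {set {set 'I_n}} | (G \subset pairs n) && `[< inFk a k G K /\ inFk a k G K' >])
     (wt p G * \sum_(H : {set {set 'I_n}} | (H \subset pairs n) &&
         (H :&: E0 == G :&: E0)) wt p H).
  rewrite /J /Gnp_prob mulr_sumr; apply: ler_sum => G /andP[sG /asboolP [iK iK']].
  rewrite mulrC; apply: ler_wpM2l; first exact: wt_ge0.
  have sS : G :&: E0 \subset E0 by apply: finset.subsetIr.
  have -> : \sum_(H : {set {set 'I_n}} | (H \subset pairs n) && (H :&: E0 == G :&: E0)) wt p H
      = p ^+ #|G :&: E0| * (1 - p) ^+ (#|E0| - #|G :&: E0|).
    exact: (@marg R _ (pairs n) E0 (G :&: E0) p sS sE).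
  set e := #|G :&: E0|; set E := #|E0|.
  have eE : (e <= E)%N by apply: subset_leq_card.
  have he : e%:R <= a * k%:R * i%:R :> R.
    by rewrite -cI; apply: edges_bound iK; apply: finset.subsetIl.
  have hE : (2 * E <= i * i)%N by rewrite -cI; apply: E0_bound.
  have hE' : (2 * E)%:R <= (i * i)%:R :> R by rewrite ler_nat.
  rewrite !natrM in hE'.
  apply: (@le_trans _ _ ((1 - p) ^+ (4 * e) * (1 - p) ^+ (E - e))).
    rewrite -exprD.
    rewrite nat_bound //.
    rewrite /c -powR_mulrn; last exact: ltW.
    apply: ger_powR; first by rewrite q0 /= lerBlDr lerDl ltW.
    rewrite natrD natrM /X; apply: num_bound => //.
  apply: ler_wpM2r; first by rewrite exprn_ge0 // ltW.
  rewrite exprM; apply: lerXn2r => //; rewrite ?nnegrE //.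
    by rewrite exprn_ge0 // ltW.
  exact: ltW.
have h2 : c * J <= PK ^+ 2.
  apply: (le_trans key); apply: (le_trans hsw); rewrite -/PK -/PK' expr2.
  by apply: ler_wpM2l.
rewrite powRN -/X -/c.
rewrite -(ler_pM2l cpos) mulrA mulfV ?mul1r //.
by apply: lt0r_neq0.
Qed.
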